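(* Let $q\geq 4$ be an integer and let $G=K_{q,q,\dots,q}$ be the complete $r$-partite graph on $rq$ vertices with all parts of size $q$. Then $\mathcal{Z}^{\mathrm{TS}}_+(G)$ and $\mathcal{Z}^{\mathrm{TE}}_+(G)$ both have exactly $r$ connected components.
   Context: PSD forcing: vertices are colored blue or white; if $B$ is the current set of blue vertices, $C$ a connected component of $G-B$, and $u$ a blue vertex with $N_G(u)\cap V(C)=\{v\}$, then $u$ may force $v$ to become blue. A PSD forcing set is a set of initially blue vertices from which repeated application of this rule turns every vertex blue; $\mathrm{Z}_+(G)$ is the minimum size of a PSD forcing set. $\mathcal{Z}^{\mathrm{TE}}_+(G)$ has as vertices the minimum PSD forcing sets of $G$, with $S_1S_2$ an edge iff $S_1\setminus S_2=\{v_1\}$ and $S_2\setminus S_1=\{v_2\}$ for some vertices $v_1,v_2$; $\mathcal{Z}^{\mathrm{TS}}_+(G)$ has the same vertices with the additional requirement $v_1v_2\in E(G)$. *)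

(* Defs.v *)
From mathcomp Require Import all_boot.
Set Implicit Arguments. Unset Strict Implicit. Unset Printing Implicit Defensive.

Section PSD.
Variables (T : finType) (e : rel T).
(* e is the (symmetric, irreflexive) adjacency relation of a simple graph on T *)

Definition del_rel (B : {set T}) : rel T :=
  [rel x y | [&& e x y, x \notin B & y \notin B]].

Definition comp_of (B : {set T}) (v : T) : {set T} :=
  [set w | connect (del_rel B) v w].

Definition psd_force (B : {set T}) (u v : T) : bool :=
  [&& u \in B, v \notin B &
      [set w in comp_of B v | e u w] == [set v]].

Definition psd_step : rel {set T} :=
  [rel B B' | [exists u, exists v, psd_force B u v && (B' == v |: B)]].

Definition psd_forcing_set (S : {set T}) : bool :=
  connect psd_step S [set: T].

Definition min_psd_forcing_set (S : {set T}) : bool :=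
  psd_forcing_set S &&
  [forall S' : {set T}, psd_forcing_set S' ==> (#|S| <= #|S'|)].

Definition TE_adj : rel {set T} :=
  [rel S1 S2 | [exists v1, exists v2,
     (S1 :\: S2 == [set v1]) && (S2 :\: S1 == [set v2])]].

Definition TS_adj : rel {set T} :=
  [rel S1 S2 | [exists v1, exists v2,
     [&& S1 :\: S2 == [set v1], S2 :\: S1 == [set v2] & e v1 v2]]].

Definition num_components (V : {set {set T}}) (a : rel {set T}) : nat :=
  let aV := [rel X Y | [&& X \in V, Y \in V & a X Y]] in
  #|[set [set Y in V | connect aV X Y] | X in V]|.

Definition ZTE_components : nat :=
  num_components [set S | min_psd_forcing_set S] TE_adj.
Definition ZTS_components : nat :=
  num_components [set S | min_psd_forcing_set S] TS_adj.
End PSD.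

Definition Kmulti_rel (r q : nat) : rel ('I_r * 'I_q) :=
  [rel x y | x.1 != y.1].
Arguments Kmulti_rel : clear implicits.

(* Main.v *)
Require Import Defs.
From mathcomp Require Import all_boot.
From mathcomp Require Import zify.
Set Implicit Arguments. Unset Strict Implicit. Unset Printing Implicit Defensive.

Ltac cardlia :=
  repeat match goal with H : context [card.body _] |- _ => revert H end;
  repeat match goal with |- context [card.body ?M] =>
    let n := fresh "n" in set n := card.body M; clearbody n end;
  intros; lia.

Section Main.
Variables (r q : nat).
Hypothesis hq : 4 <= q.
Local Notation T := ('I_r * 'I_q)%type.
Local Notation e := (Kmulti_rel r q).

Definition part (i : 'I_r) : {set T} := [set x : T | x.1 == i].

Lemma card_part i : #|part i| = q.
Proof.
have -> : part i = setX [set i] [set: 'I_q].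
  by apply/setP => -[a b]; rewrite !inE andbT.
by rewrite cardsX cards1 cardsT card_ord mul1n.
Qed.

Lemma del_relE (B : {set T}) x y :
  del_rel e B x y = [&& x.1 != y.1, x \notin B & y \notin B].
Proof. by []. Qed.

Lemma eE (x y : T) : e x y = (x.1 != y.1).
Proof. by []. Qed.

Definition goodW (W : {set T}) :=
  #|W| <= q /\ (#|W| = q -> exists i, q.-1 <= #|W :&: part i|).

Lemma force_good S u v : psd_force e S u v -> goodW (~: S).
Proof.
case/and3P => uS vS /eqP Hset.
have vW : v \in ~: S by rewrite inE.
case: (boolP [exists z, (z \in ~: S) && (z.1 != v.1)]) =>
   [/existsP [z /andP [zW zv]] | /existsPn Hall].
- have Hu : forall w, w \in ~: S -> w.1 != u.1 -> w = v.
    move=> w wW wu.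
    have wc : w \in comp_of e S v.
      rewrite inE.
      rewrite inE in zW; rewrite inE in wW.
      case: (eqVneq w.1 v.1) => wv.
      + have cvz : connect (del_rel e S) v z.
          by apply: connect1; rewrite del_relE eq_sym zv vS zW.
        apply: connect_trans cvz _.
        by apply: connect1; rewrite del_relE wv zv zW wW.
      + by apply: connect1; rewrite del_relE eq_sym wv vS wW.
    have : w \in [set w in comp_of e S v | e u w].
      by rewrite in_set wc eE eq_sym.
    by rewrite Hset inE => /eqP.
  have h1 : ~: S :\: part u.1 \subset [set v].
    apply/subsetP => w; rewrite in_setD => /andP [wP wW].
    rewrite inE in wP.
    by rewrite (Hu w wW wP) inE.
  have h2 : ~: S :&: part u.1 \subset part u.1 :\ u.
    apply/subsetP => w; rewrite !inE => /andP [wS ->]; rewrite andbT.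
    by apply: contraNneq wS => ->.
  have c1 := subset_leq_card h1; rewrite cards1 in c1.
  have c2 := subset_leq_card h2.
  have c3 := cardsD1 u (part u.1).
  have uP : u \in part u.1 by rewrite inE.
  rewrite uP card_part add1n in c3.
  have c4 := cardsID (part u.1) (~: S).
  split; first by cardlia.
  move=> Hq; exists u.1; cardlia.
- have E : ~: S :&: part v.1 = ~: S.
    apply/setIidPl; apply/subsetP => w wW.
    by move: (Hall w); rewrite wW /= negbK inE.
  have c := subset_leq_card (subsetIr (~: S) (part v.1)).
  rewrite E card_part in c.
  split => // Hq; exists v.1; rewrite E; cardlia.
Qed.

Lemma forcing_good S : psd_forcing_set e S -> goodW (~: S).
Proof.
move=> /connectP [[|S1 p]] /=.
  move=> _ <-; rewrite /goodW setCT cards0; split => // h; cardlia.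
case/andP => /existsP [u /existsP [v /andP [Hf _]]] _ _.
exact: force_good Hf.
Qed.

Lemma forcing_part i j : j != i ->
  forall S, ~: S \subset part i -> psd_forcing_set e S.
Proof.
move=> ji.
suff H : forall n S, #|~: S| <= n -> ~: S \subset part i -> psd_forcing_set e S.
  by move=> S; apply: (H #|~: S|).
elim=> [|n IH] S.
  rewrite leqn0 cards_eq0 => /eqP H0 _.
  have -> : S = setT by rewrite -[S]setCK H0 setC0.
  exact: connect0.
move=> Hn Hsub.
case: (set_0Vmem (~: S)) => [H0|[v vW]].
  have -> : S = setT by rewrite -[S]setCK H0 setC0.
  exact: connect0.
have vi : v.1 == i by move: (subsetP Hsub v vW); rewrite inE.
have vS : v \notin S by rewrite inE in vW.
have uS : (j, v.2) \in S.
  apply: contraR ji => uNS.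
  have := subsetP Hsub (j, v.2).
  by rewrite !inE uNS => /(_ isT).
have Hc : forall w, w \in comp_of e S v -> w = v.
  move=> w; rewrite inE => /connectP [[|x p]] /=; first by move=> _ ->.
  case/andP => Hvx _ _; move: Hvx; rewrite del_relE => /and3P [Hne _ xS].
  have := subsetP Hsub x; rewrite inE xS => /(_ isT); rewrite inE => /eqP xi.
  by move/eqP: vi => vi; rewrite xi vi eqxx in Hne.
have Hf : psd_force e S (j, v.2) v.
  rewrite /psd_force uS vS /=; apply/eqP/setP => w; rewrite in_set in_set1.
  apply/andP/eqP => [[/Hc //]|->]; split; first by rewrite inE connect0.
  by rewrite eE (eqP vi).
have Hst : psd_step e S (v |: S).
  by apply/existsP; exists (j, v.2); apply/existsP; exists v; rewrite Hf eqxx.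
have EC : ~: (v |: S) = ~: S :\ v by apply/setP => w; rewrite !inE negb_or.
apply: connect_trans (connect1 Hst) (IH _ _ _).
  have := cardsD1 v (~: S); rewrite vW EC add1n; cardlia.
by rewrite EC; apply: subset_trans (subD1set _ _) Hsub.
Qed.

Hypothesis hr2 : 1 < r.

Lemma other (i : 'I_r) : exists j, j != i.
Proof.
case: (eqVneq i (Ordinal hr2)) => [->|ne].
  by exists (Ordinal (ltnW hr2)); apply/eqP => /(f_equal val).
by exists (Ordinal hr2); rewrite eq_sym.
Qed.

Lemma forcing_Si i : psd_forcing_set e (~: part i).
Proof.
have [j ji] := other i.
by apply: (forcing_part ji); rewrite setCK subxx.
Qed.

Lemma min_char S :
  min_psd_forcing_set e S = psd_forcing_set e S && (#|~: S| == q).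
Proof.
rewrite /min_psd_forcing_set; apply/andP/andP => [[F /forallP H]|[F /eqP Hc]];
  split => //.
- have := H (~: part (Ordinal (ltnW hr2))); rewrite forcing_Si /= => h.
  have [Hle _] := forcing_good F.
  have := cardsC S; have := cardsC (part (Ordinal (ltnW hr2))).
  rewrite card_part => c1 c2.
  apply/eqP; cardlia.
- apply/forallP => S'; apply/implyP => F'.
  have [Hle _] := forcing_good F'.
  have := cardsC S; have := cardsC S'; cardlia.
Qed.

Definition V : {set {set T}} := [set S | min_psd_forcing_set e S].
Definition dom (X : {set T}) i := q.-1 <= #|~: X :&: part i|.

Lemma V_card X : X \in V -> #|~: X| = q.
Proof. by rewrite inE min_char => /andP [_ /eqP]. Qed.

Lemma V_dom X : X \in V -> exists i, dom X i.
Proof.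
move=> XV; have := V_card XV; move: XV; rewrite inE min_char => /andP [F _].
by have [_ H] := forcing_good F; apply: H.
Qed.

Lemma sub_disj X i j : i != j -> #|~: X :&: part j| <= #|~: X :\: part i|.
Proof.
move=> ne; apply: subset_leq_card; apply/subsetP => w.
rewrite !inE => /andP [wX /eqP wj]; rewrite wX andbT wj.
by rewrite eq_sym.
Qed.

Lemma dom_uniq X i j : X \in V -> dom X i -> dom X j -> i = j.
Proof.
move=> XV di dj; apply/eqP; apply: contraT => ne.
have h := sub_disj X ne.
have := cardsID (part i) (~: X); rewrite V_card //.
rewrite /dom in di dj; cardlia.
Qed.

Lemma dom_step X Y i : X \in V -> Y \in V -> TE_adj X Y -> dom X i -> dom Y i.
Proof.
move=> XV YV /existsP [v1 /existsP [v2 /andP [_ /eqP H2]]] di.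
have h1 : #|~: X :&: part i| <= #|~: Y :&: part i| + 1.
  have := cardsID (~: Y) (~: X :&: part i).
  have s1 : (~: X :&: part i) :&: ~: Y \subset ~: Y :&: part i.
    apply/subsetP => w; rewrite !inE; case/andP => /andP [a b] c.
    by rewrite b c.
  have s2 : (~: X :&: part i) :\: ~: Y \subset [set v2].
    rewrite -H2; apply/subsetP => w; rewrite !inE negbK.
    by case/andP => a /andP [b _]; rewrite a b.
  have := subset_leq_card s1; have := subset_leq_card s2; rewrite cards1.
  cardlia.
have [j dj] := V_dom YV.
case: (eqVneq j i) => [<- //| ne].
have h := sub_disj Y (ne : j != i).
have := cardsID (part i) (~: Y); rewrite V_card //.
rewrite /dom in di dj.
rewrite eq_sym in ne.
have h' := sub_disj Y ne.
cardlia.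
Qed.

Lemma Si_V i : ~: part i \in V.
Proof. by rewrite inE min_char forcing_Si setCK card_part eqxx. Qed.

Lemma dom_Si i : dom (~: part i) i.
Proof. by rewrite /dom setCK setIid card_part leq_pred. Qed.

Lemma adj_Si X i : X \in V -> dom X i -> X != ~: part i ->
  TS_adj e X (~: part i) && TS_adj e (~: part i) X.
Proof.
move=> XV di ne.
have cX := V_card XV.
have hle : #|~: X :&: part i| <= q.
  by have := subset_leq_card (subsetIr (~: X) (part i)); rewrite card_part.
have hneq : #|~: X :&: part i| != q.
  apply/eqP => hq'; apply: (negP ne); apply/eqP.
  have E : ~: X :&: part i = part i.
    by apply/eqP; rewrite eqEcard subsetIr card_part hq' leqnn.
  have E2 : ~: X = part i.
    apply/eqP; rewrite eq_sym eqEcard card_part cX leqnn andbT.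
    by rewrite -E subsetIl.
  by rewrite -E2 setCK.
have c1 : #|~: X :&: part i| = q.-1 by rewrite /dom in di; cardlia.
have cA : #|~: X :\: part i| == 1.
  by have := cardsID (part i) (~: X); rewrite cX; move=> h; apply/eqP; cardlia.
have cB : #|part i :\: ~: X| == 1.
  by have := cardsID (~: X) (part i); rewrite setIC card_part; move=> h; apply/eqP; cardlia.
case/cards1P: cA => p Hp; case/cards1P: cB => x Hx.
have E1 : X :\: ~: part i = part i :\: ~: X.
  by apply/setP => w; rewrite !inE !negbK andbC.
have E2 : ~: part i :\: X = ~: X :\: part i.
  by apply/setP => w; rewrite !inE andbC.
have xi : x \in part i.
  have : x \in part i :\: ~: X by rewrite Hx set11.
  by rewrite in_setD => /andP [_ ->].
have pi : p \notin part i.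
  have : p \in ~: X :\: part i by rewrite Hp set11.
  by rewrite in_setD => /andP [-> _].
rewrite inE in xi; rewrite inE in pi.
have exp : e x p by rewrite eE (eqP xi) eq_sym.
have epx : e p x by rewrite eE (eqP xi).
apply/andP; split; apply/existsP; [exists x | exists p]; apply/existsP;
  [exists p | exists x]; rewrite ?E1 ?E2 Hx Hp !eqxx //.
Qed.

Variable a : rel {set T}.
Hypothesis haTE : forall X Y, a X Y -> TE_adj X Y.
Hypothesis hTSa : forall X Y, TS_adj e X Y -> a X Y.

Definition aV := [rel X Y | [&& X \in V, Y \in V & a X Y]].

Lemma dom_connect X Y i : connect aV X Y -> X \in V -> dom X i -> dom Y i.
Proof.
case/connectP => p; elim: p X => [|Z p IH] X /=; first by move=> _ ->.
case/andP => /and3P [XV ZV aXZ] pth Hl _ di.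
exact: (IH Z pth Hl ZV (dom_step XV ZV (haTE aXZ) di)).
Qed.

Lemma count_comp : num_components V a = r.
Proof.
rewrite /num_components /=.
set cls := fun X => [set Y in V | connect aV X Y].
have -> : [set [set Y in V | connect aV X Y] | X in V]
          = [set cls (~: part i) | i in [set: 'I_r]].
  apply/setP => K; apply/imsetP/imsetP => [[X XV ->]|[i _ ->]].
  - have [i di] := V_dom XV.
    exists i; first by rewrite inE.
    case: (eqVneq X (~: part i)) => [-> //|ne].
    have /andP [h1 h2] := adj_Si XV di ne.
    have c1 : connect aV X (~: part i).
      by apply: connect1; apply/and3P; split => //; [exact: Si_V | exact: hTSa].
    have c2 : connect aV (~: part i) X.
      by apply: connect1; apply/and3P; split => //; [exact: Si_V | exact: hTSa].
    apply/setP => Y; rewrite /cls !in_set; apply: andb_id2l => _.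
    by apply/idP/idP => h; [apply: connect_trans c2 h | apply: connect_trans c1 h].
  - by exists (~: part i) => //; apply: Si_V.
rewrite card_imset ?cardsT ?card_ord //.
move=> i j /setP /(_ (~: part j)).
have mj : min_psd_forcing_set e (~: part j) by have := Si_V j; rewrite inE.
rewrite /cls !in_set mj /= connect0 => /dom_connect H.
have := H i (Si_V i) (dom_Si i) => dj.
exact: (dom_uniq (Si_V j) dj (dom_Si j)).
Qed.

End Main.

Section One.
Variable q : nat.
Hypothesis hq : 4 <= q.

Lemma forc1 (S : {set ('I_1 * 'I_q)}) :
  psd_forcing_set (Kmulti_rel 1 q) S -> S = setT.
Proof.
move=> /connectP [[|S1 p]] /=; first by move=> _ ->.
case/andP => /existsP [u /existsP [v /andP [/and3P [_ _ /eqP H] _]]] _ _.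
move/setP: H => /(_ v); rewrite in_set in_set1 eqxx.
by rewrite /Kmulti_rel /= [u.1]ord1 [v.1]ord1 eqxx andbF.
Qed.

Lemma V1 : [set S | min_psd_forcing_set (Kmulti_rel 1 q) S] = [set setT].
Proof.
apply/setP => S; rewrite !inE; apply/idP/eqP => [/andP [F _]| ->].
  exact: forc1 F.
rewrite /min_psd_forcing_set /psd_forcing_set connect0 /=.
apply/forallP => S'; apply/implyP => /forc1 ->; exact: leqnn.
Qed.

Lemma count1 (a : rel {set ('I_1 * 'I_q)}) :
  num_components [set S | min_psd_forcing_set (Kmulti_rel 1 q) S] a = 1.
Proof. by rewrite V1 /num_components imset_set1 cards1. Qed.
End One.

Theorem theorem4p15 (r q : nat) (hr : 0 < r) (hq : 4 <= q) :
  ZTS_components (Kmulti_rel r q) = r /\ ZTE_components (Kmulti_rel r q) = r.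
Proof.
have [H1|H2] : r = 1 \/ 1 < r by cardlia.
  by subst r; rewrite /ZTS_components /ZTE_components !count1.
have TSTE : forall X Y, TS_adj (Kmulti_rel r q) X Y -> TE_adj X Y.
  move=> X Y.
  by case/existsP => v1 /existsP [v2 /and3P [h1 h2 _]];
    apply/existsP; exists v1; apply/existsP; exists v2; rewrite h1 h2.
rewrite /ZTS_components /ZTE_components; split.
- by apply: count_comp.
- by apply: count_comp.
Qed.
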